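(* Let $w=\{w_j\}_{j\in\mathbb{Z}}$ be a bounded sequence of non-zero elements of $\mathbb{K}\in\{\mathbb{R},\mathbb{C}\}$. If $\liminf_{n\to\infty}\prod_{j=-n+1}^{0}|w_j|=0$, then there exists a sequence $\{p_n\}$ in $\mathbb{N}$ such that $\lim_{n\to\infty}\prod_{j=-p_n+k+1}^{k}|w_j|=0$ for all $k\in\mathbb{Z}$. *)

(* Defs.v *)
From HB Require Import structures.
From mathcomp Require Import all_boot all_order all_algebra.
From mathcomp Require Import all_classical all_reals all_analysis.
From mathcomp Require Import complex.
Set Implicit Arguments. Unset Strict Implicit. Unset Printing Implicit Defensive.
Import Order.TTheory GRing.Theory Num.Theory.
Local Open Scope ring_scope.

(* bprod a k p = \prod_{j = k-p+1}^{k} a j  (p factors; = 1 when p = 0). *)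
Definition bprod (R : realType) (a : int -> R) (k : int) (p : nat) : R :=
  \prod_(i < p) a (k - (i : nat)%:Z).

(* Main.v *)
Require Import Defs.
From HB Require Import structures.
From mathcomp Require Import all_boot all_order all_algebra.
From mathcomp Require Import all_classical all_reals all_analysis.
From mathcomp Require Import complex.
Import Order.TTheory GRing.Theory Num.Theory.
Import numFieldNormedType.Exports.
Local Open Scope classical_set_scope.
Local Open Scope ring_scope.
From mathcomp Require Import zify.

Section Aux.
Context {R : realType}.
Implicit Type a : int -> R.

Lemma bprodD a k p q : bprod a k (p + q) = bprod a k p * bprod a (k - p%:Z) q.
Proof.
rewrite /bprod big_split_ord /=; congr (_ * _); apply: eq_bigr => i _.
by congr (a _); rewrite /= PoszD opprD addrA.
Qed.

Lemma bprod_gt0 a k p : (forall j, 0 < a j) -> 0 < bprod a k p.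
Proof. by move=> ha; rewrite /bprod; apply: prodr_gt0 => i _. Qed.

Lemma bprod_le a M k p : (forall j, 0 < a j) -> (forall j, a j <= M) ->
  bprod a k p <= M ^+ p.
Proof.
move=> ha hM; rewrite /bprod.
have -> : M ^+ p = \prod_(i < p) M by rewrite prodr_const card_ord.
by apply: ler_prod => i _; rewrite ltW ?ha ?hM.
Qed.

Lemma key a M : (forall j, 0 < a j) -> (forall j, a j <= M) -> 1 <= M ->
  (forall e, 0 < e -> exists r, bprod a 0 r < e) ->
  exists p : nat -> nat, forall k : int,
    (fun n : nat => bprod a k (p n)) @ \oo --> 0.
Proof.
move=> ha hM M1 he.
have M0 : 0 < M by apply: lt_le_trans M1.
have /choice[r hr] : forall n : nat, exists r,
    M ^+ (2 * n) * bprod a 0 r < n.+1%:R^-1.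
  move=> n; have Mp : 0 < M ^+ (2 * n) by rewrite exprn_gt0.
  have hn : 0 < n.+1%:R^-1 :> R by rewrite invr_gt0.
  have [r hr] := he (n.+1%:R^-1 / M ^+ (2 * n)) (divr_gt0 hn Mp).
  by exists r; rewrite mulrC -ltr_pdivlMr.
exists (fun n => r n + n)%N => k.
suff [c [N hc]] : exists c : R, exists N : nat, forall n, (N <= n)%N ->
    bprod a k (r n + n) <= c * n.+1%:R^-1.
  apply: (@squeeze_cvgr _ _ _ _ (fun _ => 0) (fun n => c * (@harmonic R n))).
  - apply: filterS (nbhs_infty_ge N) => n /= Nn; rewrite ltW ?bprod_gt0 //=; exact: hc.
  - exact: cvg_cst.
  - rewrite -(mulr0 c); apply: cvgM; [exact: cvg_cst | exact: cvg_harmonic].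
case: k => m.
- exists 1, m => n mn; rewrite mul1r.
  have -> : (r n + n = m + (r n + (n - m)))%N by lia.
  rewrite bprodD subrr bprodD.
  apply: le_trans (ltW (hr n)).
  rewrite mulrCA mulrC; apply: ler_pM.
  + by rewrite mulr_ge0 // ltW // bprod_gt0.
  + by rewrite ltW // bprod_gt0.
  + apply: (le_trans (y := M ^+ m * M ^+ (n - m))).
      apply: ler_pM; [exact: ltW (bprod_gt0 _ _ _ ha)|exact: ltW (bprod_gt0 _ _ _ ha)|exact: bprod_le ha hM|exact: bprod_le ha hM].
    by rewrite -exprD; apply: ler_weXn2l => //; lia.
  + by [].
- set m' := m.+1.
  have hB : 0 < bprod a 0 m' by apply: bprod_gt0.
  exists (bprod a 0 m')^-1, m' => n mn.
  have E : bprod a 0 (m' + (r n + n)) = bprod a 0 m' * bprod a (Negz m) (r n + n).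
    by rewrite bprodD sub0r NegzE.
  have -> : bprod a (Negz m) (r n + n) = (bprod a 0 m')^-1 * bprod a 0 (m' + (r n + n)).
    by rewrite E mulrA mulVf ?mul1r // gt_eqF.
  rewrite ler_pM2l ?invr_gt0 //.
  apply: le_trans (ltW (hr n)).
  have -> : (m' + (r n + n) = r n + (n + m'))%N by lia.
  rewrite bprodD mulrC; apply: ler_pM.
  + exact: ltW (bprod_gt0 _ _ _ ha).
  + exact: ltW (bprod_gt0 _ _ _ ha).
  + apply: le_trans (bprod_le _ _ _ _ ha hM) _.
    by apply: ler_weXn2l => //; lia.
  + by [].
Qed.

Lemma liminf0 (u : nat -> R) :
  limn_einf (fun n => (u n)%:E) = 0%E -> forall e, 0 < e -> exists r, u r < e.
Proof.
move=> hl e e0; case: (pselect (exists r, u r < e)) => // H; exfalso.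
have hge : forall r, e <= u r.
  by move=> r; rewrite leNgt; apply/negP => h; apply: H; exists r.
have : (e%:E <= limn_einf (fun n => (u n)%:E))%E.
  rewrite limn_einf_lim; apply: lime_ge; first exact: is_cvg_einfs.
  apply: nearW => n; apply: le_ereal_inf_tmp => _ [k _ <-].
  by rewrite lee_fin hge.
by rewrite hl lee_fin leNgt e0.
Qed.

End Aux.


(* K = R : the product of |w_j| ; K = C = complex.complex R : Re `|z| is the modulus |z| viewed in R. *)
Theorem corollary3p11 (R : realType) :
  (forall w : int -> R,
     (exists M : R, forall j, `|w j| <= M) ->
     (forall j, w j != 0) ->
     limn_einf (fun n : nat => (bprod (fun j => `|w j|) 0 n)%:E) = 0%E ->
     exists p : nat -> nat, forall k : int,
       (fun n : nat => bprod (fun j => `|w j|) k (p n)) @ \oo --> 0)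
  /\
  (forall w : int -> complex.complex R,
     (exists M : R, forall j, complex.Re `|w j| <= M) ->
     (forall j, w j != 0) ->
     limn_einf (fun n : nat => (bprod (fun j => complex.Re `|w j|) 0 n)%:E) = 0%E ->
     exists p : nat -> nat, forall k : int,
       (fun n : nat => bprod (fun j => complex.Re `|w j|) k (p n)) @ \oo --> 0).
Proof.
split.
- move=> w [M hM] hw hl.
  have := @key R (fun j => `|w j|) (Num.max M 1).
  apply.
  + by move=> j; rewrite normr_gt0.
  + by move=> j; rewrite le_max hM.
  + by rewrite le_max lexx orbT.
  + exact: liminf0 hl.
- move=> w [M hM] hw hl.
  have := @key R (fun j => complex.Re `|w j|) (Num.max M 1).
  apply.
  + move=> j; have := normr_gt0 (w j); rewrite hw ltcE => /andP[_ h].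
    exact: h.
  + by move=> j; rewrite le_max hM.
  + by rewrite le_max lexx orbT.
  + exact: liminf0 hl.
Qed.
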